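(* Let $L$ be an $R_0$-algebra and $k\in[0,1)$. Given any chain of fated filters $F_0\subset F_1\subset\cdots\subset F_n=L$ of $L$, there exists an $(\in,\in\vee q_k)$-fuzzy fated filter $\mu$ of $L$ whose level fated filters $U(\mu;t)=\{x\in L\mid\mu(x)\ge t\}$, $t\in(0,\tfrac{1-k}{2}]$, are precisely the members $F_0,F_1,\dots,F_n$ of the chain, and such that $U(\mu;\tfrac{1-k}{2})=F_0$.
   Context: An $R_0$-algebra is a bounded distributive lattice $(L,\wedge,\vee,0,1)$ with an order-reversing involution $\neg$ and a binary operation $\to$ such that for all $x,y,z\in L$: $x\to y=\neg y\to\neg x$; $1\to x=x$; $(y\to z)\wedge((x\to y)\to(x\to z))=y\to z$; $x\to(y\to z)=y\to(x\to z)$; $x\to(y\vee z)=(x\to y)\vee(x\to z)$; $(x\to y)\vee((x\to y)\to(\neg x\vee y))=1$. A fated filter of $L$ is a nonempty subset $A\subseteq L$ with $1\in A$ such that for all $x,y\in L$ and $a\in A$, $a\to((x\to y)\to x)\in A$ implies $x\in A$. For $x\in L$, $t\in(0,1]$ and a fuzzy subset $\mu:L\to[0,1]$: $x_t\in\mu$ iff $\mu(x)\ge t$; $x_t\,q_k\,\mu$ iff $\mu(x)+t+k>1$; $x_t\in\vee q_k\,\mu$ iff $x_t\in\mu$ or $x_t\,q_k\,\mu$. $\mu$ is an $(\in,\in\vee q_k)$-fuzzy fated filter of $L$ if (1) for all $x\in L$, $t\in(0,1]$: $x_t\in\mu\Rightarrow 1_t\in\vee q_k\,\mu$; and (2) for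 all $x,a,y\in L$, $t,s\in(0,1]$: if $(a\to((x\to y)\to x))_t\in\mu$ and $a_s\in\mu$ then $x_{\min\{t,s\}}\in\vee q_k\,\mu$. *)

(* Defs.v *)
From Stdlib Require Import Reals.
Open Scope R_scope.

Record R0_algebra : Type := {
  car :> Type;
  meet : car -> car -> car;
  join : car -> car -> car;
  zero : car;
  one : car;
  neg : car -> car;
  imp : car -> car -> car;
  meet_assoc : forall x y z, meet x (meet y z) = meet (meet x y) z;
  join_assoc : forall x y z, join x (join y z) = join (join x y) z;
  meet_comm : forall x y, meet x y = meet y x;
  join_comm : forall x y, join x y = join y x;
  meet_absorb : forall x y, meet x (join x y) = x;
  join_absorb : forall x y, join x (meet x y) = x;
  meet_join_distr : forall x y z, meet x (join y z) = join (meet x y) (meet x z);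
  meet_zero : forall x, meet x zero = zero;
  join_one : forall x, join x one = one;
  (* order-reversing involution (x <= y iff meet x y = x) *)
  neg_invol : forall x, neg (neg x) = x;
  neg_antitone : forall x y, meet x y = x -> meet (neg y) (neg x) = neg y;
  R0_1 : forall x y, imp x y = imp (neg y) (neg x);
  R0_2 : forall x, imp one x = x;
  R0_3 : forall x y z, meet (imp y z) (imp (imp x y) (imp x z)) = imp y z;
  R0_4 : forall x y z, imp x (imp y z) = imp y (imp x z);
  R0_5 : forall x y z, imp x (join y z) = join (imp x y) (imp x z);
  R0_6 : forall x y, join (imp x y) (imp (imp x y) (join (neg x) y)) = one
}.

Arguments imp {r} _ _.
Arguments one {r}.

Definition fated_filter (L : R0_algebra) (A : L -> Prop) : Prop :=
  (exists a, A a) /\ A one /\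
  forall x y a : L, A a -> A (imp a (imp (imp x y) x)) -> A x.

Definition fz_in {L : R0_algebra} (mu : L -> R) (x : L) (t : R) : Prop :=
  mu x >= t.
Definition fz_qk {L : R0_algebra} (k : R) (mu : L -> R) (x : L) (t : R) : Prop :=
  mu x + t + k > 1.
Definition fz_in_or_qk {L : R0_algebra} (k : R) (mu : L -> R) (x : L) (t : R) : Prop :=
  fz_in mu x t \/ fz_qk k mu x t.

Definition fuzzy_subset {L : R0_algebra} (mu : L -> R) : Prop :=
  forall x, 0 <= mu x <= 1.

Definition in_inqk_fuzzy_fated_filter (L : R0_algebra) (k : R) (mu : L -> R) : Prop :=
  fuzzy_subset mu /\
  (forall (x : L) (t : R), 0 < t <= 1 -> fz_in mu x t -> fz_in_or_qk k mu one t) /\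
  (forall (x a y : L) (t s : R), 0 < t <= 1 -> 0 < s <= 1 ->
      fz_in mu (imp a (imp (imp x y) x)) t -> fz_in mu a s ->
      fz_in_or_qk k mu x (Rmin t s)).

Definition level_set {L : R0_algebra} (mu : L -> R) (t : R) : L -> Prop :=
  fun x => mu x >= t.

Definition same_set {L : Type} (A B : L -> Prop) : Prop := forall x, A x <-> B x.

(* Main.v *)
Require Import Defs.
From Stdlib Require Import Reals Lra Lia Arith ClassicalDescription.
Open Scope R_scope.

Section S.
Variable L : R0_algebra.
Variable F : nat -> L -> Prop.

Fixpoint hh (j : nat) (x : L) : nat :=
  match j with
  | O => O
  | S j' => if excluded_middle_informative (F j' x) then hh j' x else S j'
  end.

Lemma mono_chain n : (forall i, (i < n)%nat -> forall x, F i x -> F (S i) x) ->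
  forall i j x, (i <= j)%nat -> (j <= n)%nat -> F i x -> F j x.
Proof.
  intros H i j x Hij. induction Hij; intros; auto.
  apply H; [lia|]. apply IHHij; [lia|auto].
Qed.

Lemma hh_spec n : (forall i, (i < n)%nat -> forall x, F i x -> F (S i) x) ->
  forall j, (j <= n)%nat -> forall x, F j x ->
   (hh j x <= j)%nat /\ forall i, (i <= j)%nat -> (F i x <-> (hh j x <= i)%nat).
Proof.
  intros H. induction j; intros Hj x Fx; simpl.
  - split; [lia|]. intros i Hi. assert (i = 0%nat) by lia. subst. split; auto; lia.
  - destruct (excluded_middle_informative (F j x)) as [Fj|nFj].
    + destruct (IHj ltac:(lia) x Fj) as [A B]. split; [lia|].
      intros i Hi. destruct (Nat.eq_dec i (S j)).
      * subst. split; auto; lia.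
      * apply B; lia.
    + split; [lia|]. intros i Hi. destruct (Nat.eq_dec i (S j)).
      * subst. split; auto; lia.
      * split; [|lia]. intro Fi. exfalso. apply nFj.
        apply (mono_chain n H i j x); auto; lia.
Qed.
End S.

Definition vv (c : R) (i : nat) : R := c * / INR (S i).

Lemma vv_pos c i : 0 < c -> 0 < vv c i.
Proof. intros. unfold vv. apply Rmult_lt_0_compat; auto. apply Rinv_0_lt_compat, lt_0_INR; lia. Qed.

Lemma vv_le_c c i : 0 < c -> vv c i <= c.
Proof.
  intros. unfold vv. rewrite <- (Rmult_1_r c) at 2. apply Rmult_le_compat_l; [lra|].
  rewrite <- Rinv_1. apply Rinv_le_contravar; [lra|]. change 1 with (INR 1). apply le_INR; lia.
Qed.

Lemma vv_iff c a b : 0 < c -> (vv c a >= vv c b <-> (a <= b)%nat).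
Proof.
  intros Hc. unfold vv. split.
  - intros H. destruct (le_lt_dec a b) as [|Hlt]; auto. exfalso.
    assert (/ INR (S a) < / INR (S b)).
    { apply Rinv_lt_contravar. apply Rmult_lt_0_compat; apply lt_0_INR; lia.
      apply lt_INR; lia. }
    assert (c * / INR (S a) < c * / INR (S b)) by (apply Rmult_lt_compat_l; auto). lra.
  - intros H. apply Rle_ge. apply Rmult_le_compat_l; [lra|].
    apply Rinv_le_contravar. apply lt_0_INR; lia. apply le_INR; lia.
Qed.

Lemma vv_0 c : vv c 0 = c.
Proof. unfold vv. simpl. rewrite Rinv_1. ring. Qed.

Lemma largest c t : 0 < c -> 0 < t <= c -> forall n, exists i, (i <= n)%nat /\ vv c i >= t /\
  forall j, (j <= n)%nat -> vv c j >= t -> (j <= i)%nat.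
Proof.
  intros Hc Ht. induction n.
  - exists 0%nat. rewrite vv_0. split; [lia|split; [lra|]]. intros; lia.
  - destruct IHn as [i [Hi [Hv Hm]]].
    destruct (Rge_dec (vv c (S n)) t).
    + exists (S n). split; [lia|split; auto].
    + exists i. split; [lia|split; auto]. intros j Hj Hvj.
      destruct (Nat.eq_dec j (S n)). subst; contradiction. apply Hm; auto; lia.
Qed.

Theorem theorem3p26 (L : R0_algebra) (k : R) (n : nat) (F : nat -> L -> Prop) :
  0 <= k < 1 ->
  (forall i, (i <= n)%nat -> fated_filter L (F i)) ->
  (* strict chain F_0 ⊂ F_1 ⊂ ... ⊂ F_n *)
  (forall i, (i < n)%nat ->
     (forall x, F i x -> F (S i) x) /\ (exists x, F (S i) x /\ ~ F i x)) ->
  (forall x : L, F n x) ->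
  exists mu : L -> R,
    in_inqk_fuzzy_fated_filter L k mu /\
    (forall t, 0 < t <= (1 - k) / 2 ->
       exists i, (i <= n)%nat /\ same_set (level_set mu t) (F i)) /\
    (forall i, (i <= n)%nat ->
       exists t, 0 < t <= (1 - k) / 2 /\ same_set (level_set mu t) (F i)) /\
    same_set (level_set mu ((1 - k) / 2)) (F 0%nat).
Proof.
  intros Hk Hff Hch Hn.
  set (c := (1 - k) / 2).
  assert (Hc : 0 < c) by (unfold c; lra).
  assert (Hc1 : c <= 1) by (unfold c; lra).
  assert (Hmono : forall i, (i < n)%nat -> forall x, F i x -> F (S i) x)
    by (intros; apply (Hch i); auto).
  set (idx := fun x => hh L F n x).
  assert (Hidx : forall x, (idx x <= n)%nat /\
            forall i, (i <= n)%nat -> (F i x <-> (idx x <= i)%nat)).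
  { intros x. apply (hh_spec L F n Hmono n (le_n n) x (Hn x)). }
  exists (fun x => vv c (idx x)).
  assert (Hlev : forall i, (i <= n)%nat ->
            same_set (level_set (fun x => vv c (idx x)) (vv c i)) (F i)).
  { intros i Hi x. unfold level_set. rewrite vv_iff by auto.
    destruct (Hidx x) as [_ B]. rewrite (B i Hi). tauto. }
  split; [|split; [|split]].
  - split; [|split].
    + intros x. pose proof (vv_pos c (idx x) Hc). pose proof (vv_le_c c (idx x) Hc). lra.
    + intros x t Ht Hx. left. unfold fz_in in *.
      assert (idx one = 0%nat).
      { destruct (Hidx one) as [_ B]. destruct (Hff 0%nat ltac:(lia)) as [_ [H1 _]].
        apply B in H1; lia. }
      rewrite H, vv_0. pose proof (vv_le_c c (idx x) Hc). lra.
    + intros x a y t s Ht Hs H1 H2. left. unfold fz_in in *.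
      set (p := imp a (imp (imp x y) x)) in *.
      destruct (Nat.le_ge_cases (idx a) (idx p)) as [Hle|Hle].
      * assert (Hxi : (idx x <= idx p)%nat).
        { destruct (Hidx p) as [Pp Bp]. destruct (Hidx a) as [Pa Ba].
          destruct (Hff (idx p) Pp) as [_ [_ Hf]].
          apply (Hidx x); auto. apply (Hf x y a).
          apply Ba; auto. apply Bp; auto. }
        apply (vv_iff c) in Hxi; auto. pose proof (Rmin_l t s). lra.
      * assert (Hxi : (idx x <= idx a)%nat).
        { destruct (Hidx p) as [Pp Bp]. destruct (Hidx a) as [Pa Ba].
          destruct (Hff (idx a) Pa) as [_ [_ Hf]].
          apply (Hidx x); auto. apply (Hf x y a).
          apply Ba; auto. apply Bp; auto. }
        apply (vv_iff c) in Hxi; auto. pose proof (Rmin_r t s). lra.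
  - intros t Ht. destruct (largest c t Hc Ht n) as [i [Hi [Hv Hm]]].
    exists i. split; auto. intros x. unfold level_set.
    destruct (Hidx x) as [Px B]. rewrite (B i Hi). split.
    + intros H. apply Hm; auto.
    + intros H. apply (vv_iff c) in H; auto. lra.
  - intros i Hi. exists (vv c i). split.
    + split. apply vv_pos; auto. apply vv_le_c; auto.
    + apply Hlev; auto.
  - intros x. rewrite <- (Hlev 0%nat ltac:(lia) x). unfold level_set. fold c. rewrite vv_0. tauto.
Qed.
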